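(* Let $H:B^{\mathbb{N}}\to B^{\mathbb{N}}$ be a one-sided CA with local rule $H(c)_i=H_l(c_i,c_{i+1})$ (neighborhood $\{0,1\}$) and a spreading state $q\in B$. Let $k\in\mathbb{N}$ with $k>\log_2|B|$, let $A=\{0,1,2\}^{2k}$ and let $F_{2k}:A^{\mathbb{N}}\to A^{\mathbb{N}}$ be the $2k$-fold Cartesian product of the CA $F$ on $\{0,1,2\}^{\mathbb{N}}$ defined by $F(c)_i=\rho_{c_{i+1}}(c_i)$, where $\rho_0=\rho_2$ is the permutation $0\mapsto0,1\mapsto2,2\mapsto1$ and $\rho_1$ is $0\mapsto1,1\mapsto2,2\mapsto0$. Define CA $\mathcal{F},\mathcal{G}$ on $(A\times B)^{\mathbb{N}}$ with neighborhood $\{0,1\}$ by $\mathcal{G}((a_0,b_0)(a_1,b_1))=(a_0,H_l(b_0,b_1))$ and $\mathcal{F}((a_0,b_0)(a_1,b_1))=(F_{2k}(a_0a_1),H_l(b_0,b_1))$ if $H_l(b_0,b_1)\neq q$, and $=(a_0,H_l(b_0,b_1))$ if $H_l(b_0,b_1)=q$ (here $F_{2k}(a_0a_1)$ denotes the local rule of $F_{2k}$ applied to $a_0,a_1$). Then: (1) if $H$ is not nilpotent, $h(\mathcal{F})>h(\mathcal{G})$; (2) if $H$ is nilpotent, $\mathcal{F}$ and $\mathcal{G}$ are strongly conjugate and $h(\mathcal{F})=h(\mathcal{G})=0$.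
   Context: A CA is a continuous shift-commuting self-map of a full shift $A^{\mathbb{N}}$ ($A$ finite), given by a local rule. A state $s$ is spreading if the local rule maps every neighborhood pattern containing $s$ to $s$. A CA $H$ is nilpotent if there is a state $q$ with $H({}^\omega q^\omega)={}^\omega q^\omega$ (the constant configuration) such that every configuration $c$ satisfies $H^n(c)={}^\omega q^\omega$ for some $n$. The $2k$-fold Cartesian product of $F$ acts coordinatewise on $(\{0,1,2\}^{2k})^{\mathbb{N}}$. $h$ denotes topological entropy ($\log_2$). Strong conjugacy: a homeomorphism $\phi$ with $\phi\mathcal{F}=\mathcal{G}\phi$ and $\phi\sigma=\sigma\phi$. *)

(* Defs.v *)
From Stdlib Require Import Reals ClassicalEpsilon.
From mathcomp Require Import all_boot.
Set Implicit Arguments. Unset Strict Implicit. Unset Printing Implicit Defensive.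

Definition config (T : Type) := nat -> T.

Definition ca_global (T : Type) (loc : T -> T -> T) (c : config T) : config T :=
  fun i => loc (c i) (c i.+1).

Definition shift (T : Type) (c : config T) : config T := fun i => c i.+1.

Definition spreading (B : Type) (Hl : B -> B -> B) (q : B) : Prop :=
  forall a b : B, (a = q \/ b = q) -> Hl a b = q.

Definition nilpotent (B : Type) (H : config B -> config B) : Prop :=
  exists q : B, (forall i, H (fun _ => q) i = q) /\
    forall c : config B, exists n, forall i, iter n H c i = q.

(* continuity for the product (Cantor) topology on T^N *)
Definition continuous_cfg (T U : Type) (phi : config T -> config U) : Prop :=
  forall (c : config T) (n : nat), exists m : nat, forall d : config T,
    (forall i, i < m -> d i = c i) -> forall i, i < n -> phi d i = phi c i.

Definition strongly_conjugate (T : Type) (F G : config T -> config T) : Prop :=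
  exists phi psi : config T -> config T,
    continuous_cfg phi /\ continuous_cfg psi /\
    (forall c i, psi (phi c) i = c i) /\ (forall c i, phi (psi c) i = c i) /\
    (forall c i, phi (F c) i = G (phi c) i) /\
    (forall c i, phi (shift c) i = shift (phi c) i).

Definition pbool (P : Prop) : bool :=
  if excluded_middle_informative P then true else false.

Definition orbit_pattern (T : finType) (Phi : config T -> config T) (k n : nat)
  (c : config T) : {ffun 'I_n * 'I_k -> T} :=
  [ffun p => iter (nat_of_ord p.1) Phi c (nat_of_ord p.2)].

Definition n_patterns (T : finType) (Phi : config T -> config T) (k n : nat) : nat :=
  #|[set p : {ffun 'I_n * 'I_k -> T} | pbool (exists c, orbit_pattern Phi k n c = p)]|.

Definition log2 (x : R) : R := Rdiv (ln x) (ln 2).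

(* Topological entropy (log base 2) of a CA on T^N, computed through the
   cylinder partitions: h = sup_k lim_n (1/n) log2 N(k,n). *)
Definition has_entropy (T : finType) (Phi : config T -> config T) (h : R) : Prop :=
  exists L : nat -> R,
    (forall k, Un_cv (fun n => Rdiv (log2 (INR (n_patterns Phi k n.+1))) (INR n.+1)) (L k))
    /\ is_lub (fun x => exists k, L k = x) h.

(* rho_s on {0,1,2}: rho_1 = (0 1 2), rho_0 = rho_2 = (1 2) *)
Definition rho (s x : 'I_3) : 'I_3 :=
  if nat_of_ord s == 1 then inord ((x + 1) %% 3) else inord ((3 - x) %% 3).

Definition F_loc (a0 a1 : 'I_3) : 'I_3 := rho a1 a0.

Definition alphA (k : nat) := {ffun 'I_(2 * k) -> 'I_3}.
Definition F2k_loc (k : nat) (a0 a1 : alphA k) : alphA k :=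
  [ffun j => F_loc (a0 j) (a1 j)].

Definition calG_loc (B : finType) (Hl : B -> B -> B) (k : nat)
  (x0 x1 : (alphA k * B)%type) : (alphA k * B)%type :=
  (x0.1, Hl x0.2 x1.2).

Definition calF_loc (B : finType) (Hl : B -> B -> B) (q : B) (k : nat)
  (x0 x1 : (alphA k * B)%type) : (alphA k * B)%type :=
  let b := Hl x0.2 x1.2 in
  if b == q then (x0.1, b) else (F2k_loc x0.1 x1.1, b).

(* Main.v *)
Require Import Defs.
From Stdlib Require Import Reals Lra Lia FunctionalExtensionality ClassicalEpsilon.
From Stdlib Require ZArith.
From mathcomp Require Import all_boot zify.
Set Implicit Arguments. Unset Strict Implicit. Unset Printing Implicit Defensive.

Lemma pboolP (P : Prop) : pbool P = true <-> P.
Proof. by rewrite /pbool; case: excluded_middle_informative. Qed.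

Section Pat.
Variables (T : finType) (Phi : config T -> config T).

Definition Spat k n := [set p : {ffun 'I_n * 'I_k -> T} | pbool (exists c, orbit_pattern Phi k n c = p)].

Lemma inSpat k n p : p \in Spat k n <-> exists c, orbit_pattern Phi k n c = p.
Proof. by rewrite inE; apply: pboolP. Qed.

Lemma npat_gt0 (x0 : T) k n : 0 < n_patterns Phi k n.
Proof.
apply/card_gt0P; exists (orbit_pattern Phi k n (fun _ => x0)).
by apply/inSpat; exists (fun _ => x0).
Qed.

Lemma npat_factor (D : finType) k n (g : D -> {ffun 'I_n * 'I_k -> T}) :
  (forall c, exists w, orbit_pattern Phi k n c = g w) -> n_patterns Phi k n <= #|D|.
Proof.
move=> H; rewrite /n_patterns -/(Spat k n).
apply: (leq_trans _ (leq_imset_card g D)); apply: subset_leq_card.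
apply/subsetP=> p /inSpat [c <-]; have [w ->] := H c.
by apply: imset_f.
Qed.

Lemma npat_lower (D : finType) k n (g : D -> {ffun 'I_n * 'I_k -> T}) :
  injective g -> (forall w, exists c, orbit_pattern Phi k n c = g w) -> #|D| <= n_patterns Phi k n.
Proof.
move=> inj H; rewrite /n_patterns -/(Spat k n) -(card_imset (mem D) inj).
apply: subset_leq_card; apply/subsetP=> p /imsetP [w _ ->].
by apply/inSpat; apply: H.
Qed.

Lemma npat_sub k n m : n_patterns Phi k (n + m) <= n_patterns Phi k n * n_patterns Phi k m.
Proof.
rewrite /n_patterns -!/(Spat _ _).
pose sp (p : {ffun 'I_(n + m) * 'I_k -> T}) :=
  (([ffun x : 'I_n * 'I_k => p (lshift m x.1, x.2)] : {ffun 'I_n * 'I_k -> T}),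
   ([ffun x : 'I_m * 'I_k => p (rshift n x.1, x.2)] : {ffun 'I_m * 'I_k -> T})).
have inj : injective sp.
  move=> p1 p2 [e1 e2]; apply/ffunP => -[i j].
  case: (splitP i) => [a ha|b hb].
    have -> : i = lshift m a by apply: val_inj.
    by have := congr1 (fun f : {ffun 'I_n * 'I_k -> T} => f (a, j)) e1; rewrite !ffunE.
  have -> : i = rshift n b by apply: val_inj.
  by have := congr1 (fun f : {ffun 'I_m * 'I_k -> T} => f (b, j)) e2; rewrite !ffunE.
rewrite -(card_imset (mem (Spat k (n + m))) inj) -cardsX.
apply: subset_leq_card; apply/subsetP => pp /imsetP [p /inSpat [c <-] ->].
apply/setXP; split; apply/inSpat.
  by exists c; apply/ffunP => x; rewrite !ffunE.
exists (iter n Phi c); apply/ffunP => x; rewrite !ffunE /= -iterD addnC.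
done.
Qed.
End Pat.
Section CA.
Variables (T : Type) (loc : T -> T -> T).
Local Notation Phi := (ca_global loc).

Lemma iterCS t c i : iter t.+1 Phi c i = loc (iter t Phi c i) (iter t Phi c i.+1).
Proof. by rewrite iterS. Qed.

Lemma iter_local t c d i : (forall x, i <= x <= i + t -> c x = d x) ->
  iter t Phi c i = iter t Phi d i.
Proof.
elim: t i => [|t IH] i H; first by apply: H; rewrite addn0 leqnn.
rewrite !iterCS (IH i) ?(IH i.+1) // => x /andP[h1 h2]; apply: H; lia.
Qed.

Lemma iter_shift t m c j : iter t Phi (fun x => c (x + m)) j = iter t Phi c (j + m).
Proof.
elim: t j => [|t IH] j //.
by rewrite !iterCS !IH addSn.
Qed.

Lemma iter_shift1 t c j : iter t Phi (shift c) j = iter t Phi c j.+1.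
Proof.
have -> : shift c = (fun x => c (x + 1)) by apply: functional_extensionality => x; rewrite addn1.
by rewrite iter_shift addn1.
Qed.
End CA.
Open Scope R_scope.

Lemma INR_addn a b : INR (a + b)%nat = INR a + INR b.
Proof. exact: plus_INR. Qed.
Lemma INR_muln a b : INR (a * b)%nat = INR a * INR b.
Proof. exact: mult_INR. Qed.
Lemma INR_S_pos n : 0 < INR n.+1.
Proof. apply: lt_0_INR; apply/ltP. done. Qed.

Lemma small_frac C eps : 0 < eps -> exists N : nat, forall n : nat, (N <= n)%nat -> C / INR n.+1 < eps.
Proof.
move=> he.
have [hN _] := archimed (Rabs C / eps).
set N := up (Rabs C / eps) in hN *.
have h0 : 0 <= Rabs C / eps.
  by apply: Rmult_le_pos; [apply: Rabs_pos| apply: Rlt_le; apply: Rinv_0_lt_compat].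
have hN0 : (0 <= IZR N)%R by lra.
exists (Z.to_nat N) => n hn.
have hn' : IZR N <= INR n.+1.
  rewrite -[IZR N]/(IZR N) -(ZArith.Znat.Z2Nat.id N); last by apply: le_IZR.
  rewrite -INR_IZR_INZ; apply: le_INR; apply/leP; lia.
have hp := INR_S_pos n.
apply: (Rle_lt_trans _ (Rabs C / INR n.+1)).
  apply: Rmult_le_compat_r; [by apply: Rlt_le; apply: Rinv_0_lt_compat | exact: Rle_abs].
apply/(Rmult_lt_reg_r (INR n.+1)) => //.
rewrite /Rdiv Rmult_assoc Rinv_l; last by lra.
have : Rabs C < IZR N * eps.
  have := Rmult_lt_compat_r eps _ _ he hN.
  by rewrite /Rdiv Rmult_assoc Rinv_l; lra.
nra.
Qed.

Lemma cv_lower (u : nat -> R) l a : Un_cv u l -> (forall n, a <= u n) -> a <= l.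
Proof.
move=> hc hu; apply: Rnot_lt_le => hl.
have [N hN] := hc (a - l) ltac:(lra).
have := hN N (le_n _); rewrite /R_dist; have := hu N.
move=> h1 /Rabs_def2 [h2 h3]; lra.
Qed.

Lemma cv_upper (u : nat -> R) l a C : Un_cv u l ->
  (forall n, u n <= a + C / INR n.+1) -> l <= a.
Proof.
move=> hc hu; apply: Rnot_lt_le => hl.
have [N1 hN1] := hc ((l - a) / 2) ltac:(lra).
have [N2 hN2] := @small_frac C ((l - a) / 2) ltac:(lra).
have hn1 : (N1 <= N1 + N2)%nat by lia.
have hn2 : (N2 <= N1 + N2)%nat by lia.
have := hN1 _ (leP hn1); have := hN2 _ hn2; have := hu (N1 + N2)%nat.
rewrite /R_dist => h1 h2 /Rabs_def2 [h3 h4]; lra.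
Qed.
Lemma fekete (f : nat -> R) : (forall n m, f (n + m)%nat <= f n + f m) -> (forall n, 0 <= f n) ->
  exists l, Un_cv (fun n => f n.+1 / INR n.+1) l.
Proof.
move=> hsub hpos.
set u := fun n => f n.+1 / INR n.+1.
have upos : forall n, 0 <= u n.
  move=> n; apply: Rmult_le_pos => //; apply: Rlt_le; apply: Rinv_0_lt_compat; exact: INR_S_pos.
set E := fun x => exists n, x = - u n.
have [M [hub hlub]] : {M | is_lub E M}.
  apply: completeness; first by exists 0 => x [n ->]; have := upos n; lra.
  by exists (- u 0%nat); exists 0%nat.
set l := - M.
have low : forall n, l <= u n by move=> n; have := hub (- u n) (ex_intro _ n erefl); rewrite /l; lra.
have app : forall eps, 0 < eps -> exists m, u m < l + eps.
  move=> eps he; apply: NNPP => hn.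
  have : M <= M - eps.
    apply: hlub => x [n ->].
    have : ~ u n < l + eps by move=> h; apply: hn; exists n.
    rewrite /l; lra.
  lra.
exists l => eps he.
have [m0 hm0] := app (eps / 2) ltac:(lra).
set m := m0.+1.
have A1 : forall q, f (q * m)%nat <= f 0%nat + INR q * f m.
  elim=> [|q IH]; first by rewrite mul0n /=; lra.
  rewrite mulSnr; apply: (Rle_trans _ _ _ (hsub _ _)); rewrite S_INR; lra.
have A2 : forall r, f r <= f 0%nat + INR r * f 1%nat.
  elim=> [|r IH]; first by rewrite /=; lra.
  rewrite -addn1; apply: (Rle_trans _ _ _ (hsub _ _)); rewrite INR_addn /=; lra.
set C := 2 * f 0%nat + INR m * f 1%nat.
have [N hN] := @small_frac C (eps / 2) ltac:(lra).
exists N => n hn; rewrite /R_dist.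
have hnN : (N <= n)%nat by apply/leP.
have key : u n <= u m0 + C / INR n.+1.
  set n' := n.+1.
  have hn' : (n' = n' %/ m * m + n' %% m)%nat by apply: divn_eq.
  have hr : (n' %% m < m)%nat by apply: ltn_pmod.
  set q := (n' %/ m)%nat in hn' *; set r := (n' %% m)%nat in hn' hr *.
  have hp := INR_S_pos n.
  have hf : f n' <= 2 * f 0%nat + INR q * f m + INR m * f 1%nat.
    rewrite hn'; apply: (Rle_trans _ _ _ (hsub _ _)).
    have := A1 q; have := A2 r.
    have : INR r <= INR m by apply: le_INR; apply/leP; apply: ltnW.
    have := hpos 1%nat. nra.
  have hqm : INR q * INR m <= INR n'.
    rewrite -INR_muln; apply: le_INR; apply/leP; rewrite [X in (_ <= X)%nat]hn'; lia.
  have hm : 0 < INR m by apply: INR_S_pos.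
  have um : u m0 = f m / INR m by [].
  rewrite /u -/n'.
  have e1 : INR q * f m / INR n' = (INR q * INR m / INR n') * (f m / INR m) by field; split; apply: Rgt_not_eq.
  have hfm : 0 <= f m / INR m by rewrite -um.
  have hq1 : INR q * INR m / INR n' <= 1.
    rewrite /Rdiv -(Rinv_r (INR n')); last by apply: Rgt_not_eq.
    apply: Rmult_le_compat_r => //; apply: Rlt_le; apply: Rinv_0_lt_compat => //.
  have : f n' / INR n' <= INR q * f m / INR n' + C / INR n'.
    rewrite /C /Rdiv -Rmult_plus_distr_r; apply: Rmult_le_compat_r; last by lra.
    by apply: Rlt_le; apply: Rinv_0_lt_compat.
  rewrite e1 -/m => h.
  have := Rmult_le_compat_r _ _ _ hfm hq1; lra.
have h1 := hN n hnN; have h2 := low n.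
rewrite Rabs_right; lra.
Qed.

Lemma ln2_pos : 0 < ln 2.
Proof. have := ln_lt_2; lra. Qed.

Lemma log2_le x y : 0 < x -> x <= y -> log2 x <= log2 y.
Proof.
move=> hx hxy; rewrite /log2 /Rdiv; apply: Rmult_le_compat_r.
  by apply: Rlt_le; apply: Rinv_0_lt_compat; apply: ln2_pos.
case: hxy => h; last by rewrite h; apply: Rle_refl.
by apply: Rlt_le; apply: ln_increasing.
Qed.

Lemma log2_mult x y : 0 < x -> 0 < y -> log2 (x * y) = log2 x + log2 y.
Proof. by move=> hx hy; rewrite /log2 ln_mult // /Rdiv Rmult_plus_distr_r. Qed.

Lemma log2_pow x n : 0 < x -> log2 (x ^ n) = INR n * log2 x.
Proof. by move=> hx; rewrite /log2 ln_pow // /Rdiv Rmult_assoc. Qed.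

Lemma log2_1 : log2 1 = 0.
Proof. by rewrite /log2 ln_1 /Rdiv Rmult_0_l. Qed.

Lemma log2_2 : log2 2 = 1.
Proof. rewrite /log2 /Rdiv Rinv_r //; have := ln2_pos; lra. Qed.

Lemma INR_expn a b : INR (a ^ b)%nat = INR a ^ b.
Proof. elim: b => [|b IH]; first by rewrite expn0. by rewrite expnS INR_muln IH. Qed.

Lemma INR_pos_nat N : (0 < N)%nat -> 0 < INR N.
Proof. by move=> h; apply: lt_0_INR; apply/ltP. Qed.

Lemma log2_nat_ge0 N : (0 < N)%nat -> 0 <= log2 (INR N).
Proof.
move=> h; rewrite -log2_1; apply: log2_le; first lra.
by rewrite -[1]/(INR 1); apply: le_INR; apply/leP.
Qed.

Lemma log2_nat_le N a b : (0 < a)%nat -> (0 < N)%nat -> (N <= a ^ b)%nat -> log2 (INR N) <= INR b * log2 (INR a).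
Proof.
move=> ha h1 h2.
rewrite -log2_pow; last exact: INR_pos_nat.
rewrite -INR_expn; apply: log2_le; first exact: INR_pos_nat.
by apply: le_INR; apply/leP.
Qed.

Lemma log2_nat_ge N a b : (0 < a)%nat -> (a ^ b <= N)%nat -> INR b * log2 (INR a) <= log2 (INR N).
Proof.
move=> h1 h2.
rewrite -log2_pow; last exact: INR_pos_nat.
rewrite -INR_expn; apply: log2_le; first by apply: INR_pos_nat; rewrite expn_gt0 h1.
by apply: le_INR; apply/leP.
Qed.

Lemma nth_prefix (T : Type) (x0 : T) (c : nat -> T) m x : (x < m)%nat ->
  nth x0 [tuple c (nat_of_ord j) | j < m] x = c x.
Proof. by move=> h; rewrite -[x]/(nat_of_ord (Ordinal h)) nth_mktuple. Qed.

Section Entropy.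
Variables (T : finType) (loc : T -> T -> T) (x0 : T).
Local Notation Phi := (ca_global loc).

Lemma npat_upper k n : (n_patterns Phi k n <= #|T| ^ (k + n))%nat.
Proof.
rewrite -card_tuple.
apply: (npat_factor (g := fun w : (k + n).-tuple T => orbit_pattern Phi k n (fun x => nth x0 w x))).
move=> c; exists [tuple c (nat_of_ord j) | j < k + n].
apply/ffunP => -[t i]; rewrite !ffunE /=; apply: iter_local => x hx.
by rewrite nth_prefix //; move: (ltn_ord t) (ltn_ord i) hx; lia.
Qed.

Definition useq k n := log2 (INR (n_patterns Phi k n.+1)) / INR n.+1.

Lemma limit_exists k : exists l, Un_cv (useq k) l.
Proof.
apply: (fekete (f := fun n => log2 (INR (n_patterns Phi k n)))).
  move=> n m.
  rewrite -log2_mult; try exact: INR_pos_nat (npat_gt0 _ x0 _ _).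
  apply: log2_le; first exact: INR_pos_nat (npat_gt0 _ x0 _ _).
  by rewrite -INR_muln; apply: le_INR; apply/leP; apply: npat_sub.
by move=> n; apply: log2_nat_ge0; apply: npat_gt0.
Qed.

Lemma useq_upper k n : useq k n <= log2 (INR #|T|) + (INR k * log2 (INR #|T|)) / INR n.+1.
Proof.
rewrite /useq.
have hp := INR_S_pos n.
have hT : (0 < #|T|)%nat by apply/card_gt0P; exists x0.
have h := log2_nat_le hT (npat_gt0 Phi x0 k n.+1) (npat_upper k n.+1).
rewrite INR_addn Rmult_plus_distr_r in h.
rewrite {1}(_ : log2 (INR #|T|) = INR n.+1 * log2 (INR #|T|) / INR n.+1); last by field; lra.
rewrite /Rdiv -Rmult_plus_distr_r; apply: Rmult_le_compat_r.
  by apply: Rlt_le; apply: Rinv_0_lt_compat.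
lra.
Qed.

Lemma entropy_exists : exists h, has_entropy Phi h.
Proof.
pose L k := proj1_sig (constructive_indefinite_description _ (limit_exists k)).
have hL : forall k, Un_cv (useq k) (L k) by move=> k; rewrite /L; case: constructive_indefinite_description.
have [h hh] : {m | is_lub (fun x => exists k, L k = x) m}.
  apply: completeness; last by exists (L 0%nat); exists 0%nat.
  exists (log2 (INR #|T|)) => x [k <-].
  exact: cv_upper (hL k) (useq_upper k).
by exists h; exists L; split.
Qed.
End Entropy.

Section EntropyZero.
Variables (T : finType) (loc : T -> T -> T) (x0 : T).
Local Notation Phi := (ca_global loc).

Lemma cv_squeeze0 (u : nat -> R) C : (forall n, 0 <= u n) -> (forall n, u n <= C / INR n.+1) -> Un_cv u 0.
Proof.
move=> h0 h1 eps he; have [N hN] := @small_frac C eps he.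
exists N => n hn; rewrite /R_dist Rminus_0_r Rabs_right; last by apply: Rle_ge.
have := hN n (introT leP hn); have := h1 n; lra.
Qed.

Lemma entropy_zero N0 : (forall c t i, iter (N0 + t) Phi c i = iter N0 Phi c i) -> has_entropy Phi 0.
Proof.
move=> hfix.
have hmin : forall c t i, iter t Phi c i = iter (minn t N0) Phi c i.
  move=> c t i; case: (leqP t N0) => h //.
  by rewrite -(subnKC (ltnW h)) hfix.
have hT : (0 < #|T|)%nat by apply/card_gt0P; exists x0.
have bound : forall k n, (n_patterns Phi k n <= #|T| ^ (k + N0))%nat.
  move=> k n; rewrite -card_tuple.
  apply: (npat_factor (g := fun w : (k + N0).-tuple T => orbit_pattern Phi k n (fun x => nth x0 w x))).
  move=> c; exists [tuple c (nat_of_ord j) | j < k + N0].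
  apply/ffunP => -[t i]; rewrite !ffunE /= hmin [in RHS]hmin; apply: iter_local => x hx.
  rewrite nth_prefix //; move: (ltn_ord i) hx (geq_minr t N0); lia.
exists (fun _ => 0); split.
  move=> k; apply: (@cv_squeeze0 _ (INR (k + N0) * log2 (INR #|T|))) => n.
    rewrite /Rdiv; apply: Rmult_le_pos.
      by apply: log2_nat_ge0; apply: npat_gt0.
    by apply: Rlt_le; apply: Rinv_0_lt_compat; apply: INR_S_pos.
  rewrite /Rdiv; apply: Rmult_le_compat_r.
    by apply: Rlt_le; apply: Rinv_0_lt_compat; apply: INR_S_pos.
  apply: log2_nat_le => //; first by apply: npat_gt0.
split; first by move=> x [k <-]; apply: Rle_refl.
by move=> b hb; apply: hb; exists 0%nat.
Qed.
End EntropyZero.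

Section Konig.
Variables (B : finType) (Hl : B -> B -> B) (q : B).
Hypothesis Hspread : spreading Hl q.
Local Notation H := (ca_global Hl).
Local Open Scope nat_scope.

Lemma const_q t i : iter t H (fun _ => q) i = q.
Proof. elim: t i => [|t IH] i //; rewrite iterCS !IH; apply: Hspread; by left. Qed.

Lemma stay_q s t c i : (s <= t)%nat -> iter s H c i = q -> iter t H c i = q.
Proof.
move=> hst hs; rewrite -(subnKC hst); elim: (t - s)%nat => [|m IH]; first by rewrite addn0.
by rewrite addnS iterCS IH; apply: Hspread; left.
Qed.

Lemma back_nonq m s c j : iter (s + m) H c j <> q ->
  forall j', (j <= j' <= j + m)%nat -> iter s H c j' <> q.
Proof.
elim: m s => [|m IH] s h j' hj'.
  have e : j' = j by lia.
  by rewrite e -[s]addn0.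
rewrite addnS -addSn in h.
have h1 := IH s.+1 h.
case: (ltnP j' (j + m).+1) => hlt.
  move=> e; apply: (h1 j'); first lia.
  by rewrite iterCS e; apply: Hspread; left.
have -> : j' = (j + m).+1 by lia.
move=> e; have hh : (j <= j + m <= j + m)%nat by lia.
apply: (h1 (j + m) hh).
by rewrite iterCS e; apply: Hspread; right.
Qed.

Definition good (p : seq B) := forall N, exists d : config B,
  (forall i, (i < size p)%nat -> d i = nth q p i) /\
  (forall s j, (s + j <= N)%nat -> iter s H d j <> q).

Lemma good_ext p : good p -> exists x, good (rcons p x).
Proof.
move=> hg; apply: NNPP => hn.
have hx : forall x, exists N, ~ (exists d : config B,
  (forall i, (i < size (rcons p x))%nat -> d i = nth q (rcons p x) i) /\
  (forall s j, (s + j <= N)%nat -> iter s H d j <> q)).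
  move=> x; apply: not_all_ex_not => hall; apply: hn; exists x; exact: hall.
pose Nf x := proj1_sig (constructive_indefinite_description _ (hx x)).
have hNf : forall x, ~ (exists d : config B,
  (forall i, (i < size (rcons p x))%nat -> d i = nth q (rcons p x) i) /\
  (forall s j, (s + j <= Nf x)%nat -> iter s H d j <> q)).
  by move=> x; rewrite /Nf; case: constructive_indefinite_description.
have [d [hd1 hd2]] := hg (\max_(x : B) Nf x).
apply: (hNf (d (size p))); exists d; split.
  move=> i; rewrite size_rcons ltnS leq_eqVlt => /orP [/eqP ->|hi].
    by rewrite nth_rcons ltnn eqxx.
  by rewrite nth_rcons hi hd1.
move=> s j hsj; apply: hd2; apply: (leq_trans hsj).
by apply: (@leq_bigmax_cond _ _ _ (d (size p))).
Qed.

Lemma konig : (forall N, exists c i, iter N H c i <> q) -> exists b, forall s j, iter s H b j <> q.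
Proof.
move=> hyp.
have g0 : good [::].
  move=> N; have [c [i hci]] := hyp N.
  exists (fun x => c (x + i)); split => // s j hsj.
  have hN : iter (s + (N - s)) H (fun x => c (x + i)) 0 <> q.
    by rewrite subnKC ?iter_shift ?add0n //; lia.
  apply: (back_nonq hN); lia.
pose ch p := epsilon (inhabits q) (fun x => good (rcons p x)).
have hch : forall p, good p -> good (rcons p (ch p)).
  move=> p hp; rewrite /ch; apply: (epsilon_spec (inhabits q) (fun x => good (rcons p x))).
  exact: good_ext.
pose pre := fix pre n := if n is n'.+1 then rcons (pre n') (ch (pre n')) else [::].
have gpre : forall n, good (pre n) by elim=> [|n IH] //=; apply: hch.
have spre : forall n, size (pre n) = n by elim=> [|n IH] //=; rewrite size_rcons IH.
have ppre : forall n m i, (i < n)%nat -> (n <= m)%nat -> nth q (pre m) i = nth q (pre n) i.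
  move=> n m i hi; elim: m => [|m IH] hm; first lia.
  case: (leqP n m) => h.
    by rewrite /= nth_rcons spre (leq_trans hi h) IH.
  by have -> : n = m.+1 by lia.
exists (fun i => nth q (pre i.+1) i) => s j.
have [d [hd1 hd2]] := gpre (s + j).+1 (s + j).
rewrite (@iter_local _ _ s _ d); first by apply: hd2.
move=> x hx; rewrite hd1 ?spre; last by lia.
by rewrite (ppre x.+1 (s + j).+1) //; lia.
Qed.

Lemma nil_uniform : nilpotent H -> exists N0, forall c i, iter N0 H c i = q.
Proof.
move=> [q' [hfix hall]].
have eq : q' = q by have [n hn] := hall (fun _ => q); rewrite -(hn 0%nat) const_q.
subst q'; apply: NNPP => hn.
have [b hb] : exists b, forall s j, iter s H b j <> q.
  apply: konig => N; apply: NNPP => h1; apply: hn; exists N => c i.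
  apply: NNPP => h2; apply: h1; by exists c, i.
have [n hbn] := hall b; exact: hb n 0%nat (hbn 0%nat).
Qed.

Lemma nonnil_orbit : ~ nilpotent H -> exists b, forall s j, iter s H b j <> q.
Proof.
move=> hn; apply: konig => N; apply: NNPP => h1; apply: hn; exists q; split.
  by move=> i; rewrite /ca_global; apply: Hspread; left.
move=> c; exists N => i; apply: NNPP => h2; apply: h1; by exists c, i.
Qed.
End Konig.

Definition ginv (y s : 'I_3) : 'I_3 :=
  if nat_of_ord s == 1%nat then inord ((y + 2) %% 3) else inord ((3 - y) %% 3).

Ltac ord3 := repeat (case=> [[|[|[|//]]] ?]); try apply: val_inj; rewrite /= /ginv /rho /= ?inordK //= ?inordK.
Lemma G1 : forall s x : 'I_3, ginv (rho s x) s = x.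
Proof. ord3. Qed.
Lemma G2 : forall s y : 'I_3, rho s (ginv y s) = y.
Proof. ord3. Qed.
Lemma G3 : forall y y' s s' : 'I_3, ginv y (ginv y' s) = ginv y (ginv y' s').
Proof. ord3. Qed.
Lemma R1 : forall s x : 'I_3, (s : nat) != 1%nat -> (x : nat) != 2%nat -> (rho s x : nat) != 1%nat.
Proof. ord3. Qed.
Lemma R2 : forall s x : 'I_3, (s : nat) != 2%nat -> (x : nat) != 1%nat -> (rho s x : nat) != 2%nat.
Proof. ord3. Qed.
Lemma R3 : forall x s s' : 'I_3, (x : nat) != 1%nat -> ((s : nat) == 1%nat) != ((s' : nat) == 1%nat) ->
  ((rho s x : nat) == 1%nat) != ((rho s' x : nat) == 1%nat).
Proof. ord3. Qed.

Section SingleF.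
Local Open Scope nat_scope.
Local Notation FG := (ca_global F_loc).

Definition Xinv (c : config 'I_3) := forall i, if odd i then (c i : nat) != 1 else (c i : nat) != 2.

Lemma inv_F c : Xinv c -> forall m i,
  if odd (i + m) then (iter m FG c i : nat) != 1 else (iter m FG c i : nat) != 2.
Proof.
move=> hc; elim=> [|m IH] i; first by rewrite addn0; apply: hc.
rewrite iterCS /F_loc addnS /=.
have h1 := IH i; have h2 := IH i.+1; rewrite addSn /= in h2.
case: (odd (i + m)) h1 h2 => /= h1 h2; [exact: R2 | exact: R1].
Qed.

Lemma diff_F c c' t : Xinv c -> Xinv c' -> ~~ odd t -> (forall x, x < t -> c x = c' x) ->
  ((c t : nat) == 1) != ((c' t : nat) == 1) -> iter t FG c 0 != iter t FG c' 0.
Proof.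
move=> hc hc' ht hag hd.
suff : forall k, k <= t -> ((iter k FG c (t - k) : nat) == 1) != ((iter k FG c' (t - k) : nat) == 1).
  move=> /(_ t (leqnn t)); rewrite subnn; apply: contra => /eqP -> ; by rewrite eqxx.
elim=> [|k IH] hk; first by rewrite subn0.
have ek : t - k = (t - k.+1).+1 by lia.
rewrite !iterCS /F_loc -ek.
have ex : iter k FG c (t - k.+1) = iter k FG c' (t - k.+1).
  by apply: iter_local => x hx; apply: hag; lia.
rewrite ex; apply: R3; last by apply: IH; lia.
have := inv_F hc' k (t - k.+1).
have -> : odd (t - k.+1 + k) = true.
  have -> : t - k.+1 + k = t.-1 by lia.
  have ht0 : 0 < t by lia.
  by move: ht; rewrite -{1}(prednK ht0) /= negbK.
done.
Qed.

Definition o1 : 'I_3 := inord 1.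
Definition bitc (s : seq bool) : config 'I_3 :=
  fun i => if odd i then ord0 else if nth false s i./2 then o1 else ord0.

Lemma bitc_inv s : Xinv (bitc s).
Proof. move=> i; rewrite /bitc; case: (odd i) => //; case: ifP => // _; by rewrite /o1 inordK. Qed.

Lemma bitc_diff (s s' : seq bool) m : (forall l, l < m -> nth false s l = nth false s' l) ->
  nth false s m != nth false s' m ->
  iter m.*2 FG (bitc s) 0 != iter m.*2 FG (bitc s') 0.
Proof.
move=> hl hm; apply: diff_F; try exact: bitc_inv; first by rewrite odd_double.
  move=> x hx; rewrite /bitc; case: (odd x) => //; rewrite hl //.
  by rewrite ltn_half_double.
rewrite /bitc odd_double doubleK.
by case: (nth false s m) (nth false s' m) hm => -[] //; rewrite /o1 inordK.
Qed.
End SingleF.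

Section Spec.
Variables (B : finType) (Hl : B -> B -> B) (q : B) (K : nat).
Hypothesis Hspread : spreading Hl q.
Local Open Scope nat_scope.
Local Notation H := (ca_global Hl).
Local Notation A := (alphA K).
Local Notation calF := (ca_global (@calF_loc B Hl q K)).
Local Notation calG := (ca_global (@calG_loc B Hl K)).

Definition upd (b : config B) t i : bool := iter t.+1 H b i != q.
Definition stepA (b : config B) t (a : config A) : config A :=
  fun i => if upd b t i then F2k_loc (a i) (a i.+1) else a i.
Fixpoint fwdA (b : config B) t (a : config A) : config A :=
  if t is t'.+1 then stepA b t' (fwdA b t' a) else a.
Definition backA (b : config B) t (e : config A) : config A :=
  fun i => if upd b t i then
    [ffun j => ginv (e i j) (if upd b t i.+1 then ginv (e i.+1 j) ord0 else e i.+1 j)]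
  else e i.
Fixpoint bwdA (b : config B) t (e : config A) : config A :=
  if t is t'.+1 then bwdA b t' (backA b t' e) else e.

Lemma calG_iter t c i : iter t calG c i = ((c i).1, iter t H (fun x => (c x).2) i).
Proof. by elim: t i => [|t IH] i; [rewrite /=; case: (c i) | rewrite !iterCS !IH]. Qed.

Lemma calF_iter t c i :
  iter t calF c i = (fwdA (fun x => (c x).2) t (fun x => (c x).1) i, iter t H (fun x => (c x).2) i).
Proof.
elim: t i => [|t IH] i; first by rewrite /=; case: (c i).
rewrite !iterCS !IH /calF_loc /= /stepA /upd iterCS.
by case: eqP.
Qed.

Lemma BF b t a : backA b t (stepA b t a) = a.
Proof.
apply: functional_extensionality => i; rewrite /backA /stepA.
case: (upd b t i) => //; apply/ffunP => j; rewrite !ffunE.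
case: (upd b t i.+1); rewrite ?ffunE /F_loc.
  by rewrite (G3 _ _ ord0 (a i.+2 j)) !G1.
by rewrite G1.
Qed.

Lemma FB b t e : stepA b t (backA b t e) = e.
Proof.
apply: functional_extensionality => i; rewrite /backA /stepA.
case: (upd b t i) => //; apply/ffunP => j; rewrite !ffunE /F_loc.
case: (upd b t i.+1); rewrite ?ffunE.
  by rewrite (G3 _ _ ord0 (if upd b t i.+2 then ginv (e i.+2 j) ord0 else e i.+2 j)) G2.
by rewrite G2.
Qed.

Lemma bwd_fwd b t a : bwdA b t (fwdA b t a) = a.
Proof. elim: t a => [|t IH] a //=; by rewrite BF IH. Qed.

Lemma fwd_bwd b t e : fwdA b t (bwdA b t e) = e.
Proof. elim: t e => [|t IH] e //=; by rewrite IH FB. Qed.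

Lemma upd_local b b' t i : (forall x, i <= x <= i + t.+1 -> b x = b' x) -> upd b t i = upd b' t i.
Proof. by move=> h; rewrite /upd (@iter_local _ _ t.+1 b b' i). Qed.

Lemma back_local b b' e e' t i : (forall x, i <= x < i + t + 3 -> b x = b' x /\ e x = e' x) ->
  backA b t e i = backA b' t e' i.
Proof.
move=> h; rewrite /backA.
rewrite (@upd_local b b' t i); last by move=> x hx; case: (h x); first lia.
rewrite (@upd_local b b' t i.+1); last by move=> x hx; case: (h x); first lia.
have [_ -> ] : b i = b' i /\ e i = e' i by apply: h; lia.
have [_ -> ] : b i.+1 = b' i.+1 /\ e i.+1 = e' i.+1 by apply: h; lia.
done.
Qed.

Lemma bwd_local t : exists r, forall b b' e e' i,
  (forall x, i <= x < i + r -> b x = b' x /\ e x = e' x) -> bwdA b t e i = bwdA b' t e' i.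
Proof.
elim: t => [|t [r IH]]; first by exists 1 => b b' e e' i h /=; case: (h i); first lia.
exists (r + t + 3) => b b' e e' i h /=; apply: IH => x hx; split.
  by case: (h x); first lia.
by apply: back_local => y hy; apply: h; lia.
Qed.

Lemma fwd_full b t a : (forall s i, upd b s i) -> forall i, fwdA b t a i = iter t (ca_global (@F2k_loc K)) a i.
Proof.
move=> hu; elim: t => [|t IH] i //.
by rewrite iterCS /= /stepA hu -!IH.
Qed.

Lemma F2_coord t a i j : (iter t (ca_global (@F2k_loc K)) a i) j = iter t (ca_global F_loc) (fun x => a x j) i.
Proof. by elim: t i => [|t IH] i //; rewrite !iterCS ffunE !IH. Qed.

Lemma calF_frozen (x : config (A * B)) : (forall i, (x i).2 = q) -> calF x = x.
Proof.
move=> h; apply: functional_extensionality => i.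
rewrite /ca_global /calF_loc !h.
have -> : Hl q q = q by apply: Hspread; left.
by rewrite eqxx -(h i); case: (x i).
Qed.

End Spec.

Section Part2.
Variables (B : finType) (Hl : B -> B -> B) (q : B) (K : nat).
Hypothesis Hspread : spreading Hl q.
Local Open Scope nat_scope.
Local Notation H := (ca_global Hl).
Local Notation A := (alphA K).
Local Notation calF := (ca_global (@calF_loc B Hl q K)).
Local Notation calG := (ca_global (@calG_loc B Hl K)).

Lemma part2 : nilpotent H ->
  strongly_conjugate calF calG /\ has_entropy calF 0 /\ has_entropy calG 0.
Proof.
move=> hnil.
have [N0 hN0] := nil_uniform Hspread hnil.
have hq : forall t c i, iter (N0 + t) H c i = q.
  by move=> t c i; apply: (@stay_q _ _ _ Hspread N0) => //; apply: leq_addr.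
pose x0 : A * B := ([ffun _ => ord0], q).
have frz : forall t c, iter (N0 + t) calF c = iter N0 calF c.
  move=> t c; elim: t => [|t IH]; first by rewrite addn0.
  rewrite addnS iterS IH calF_frozen // => i.
  by rewrite calF_iter /= hN0.
split; last split.
- pose phi (c : config (A * B)) : config (A * B) := fun i => ((iter N0 calF c i).1, (c i).2).
  pose psi (d : config (A * B)) : config (A * B) :=
    fun i => (bwdA Hl q (fun x => (d x).2) N0 (fun x => (d x).1) i, (d i).2).
  exists phi, psi; split; last split; last split; last split; last split.
  + move=> c n; exists (n + N0.+1) => d hd i hi; rewrite /phi.
    rewrite (@iter_local _ _ N0 d c i); last by move=> x hx; apply: hd; lia.
    by rewrite hd //; lia.
  + move=> c n; have [r hr] := bwd_local Hl q K N0.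
    exists (n + r) => d hd i hi; rewrite /psi.
    rewrite (hr _ (fun x => (c x).2) _ (fun x => (c x).1)); last first.
      by move=> x hx; rewrite hd //; lia.
    by rewrite hd //; lia.
  + move=> c i; rewrite /psi /phi /=.
    have -> : (fun x => (iter N0 calF c x).1) = fwdA Hl q (fun x => (c x).2) N0 (fun x => (c x).1).
      by apply: functional_extensionality => x; rewrite calF_iter.
    by rewrite bwd_fwd; case: (c i).
  + move=> d i; rewrite /psi /phi calF_iter /= fwd_bwd; by case: (d i).
  + move=> c i; rewrite /phi /ca_global /calG_loc /=.
    have -> : iter N0 calF (calF c) = iter N0 calF c.
      by rewrite -iterSr -addn1 frz.
    by rewrite /calF_loc; case: eqP.
  + by move=> c i; rewrite /phi /shift iter_shift1.
- apply: (entropy_zero x0 (N0 := N0)) => c t i.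
  by rewrite frz.
- apply: (entropy_zero x0 (N0 := N0)) => c t i.
  by rewrite !calG_iter hq hN0.
Qed.
End Part2.

Section Part1.
Variables (B : finType) (Hl : B -> B -> B) (q : B) (K : nat).
Hypothesis Hspread : spreading Hl q.
Local Open Scope nat_scope.
Local Notation H := (ca_global Hl).
Local Notation A := (alphA K).
Local Notation calF := (ca_global (@calF_loc B Hl q K)).
Local Notation calG := (ca_global (@calG_loc B Hl K)).

Lemma npat_G (a0 : A) k n : n_patterns calG k n <= #|A| ^ k * #|B| ^ (k + n).
Proof.
rewrite -!card_tuple -card_prod.
apply: (npat_factor (g := fun w : k.-tuple A * (k + n).-tuple B =>
  orbit_pattern calG k n (fun x => (nth a0 w.1 x, nth q w.2 x)))).
move=> c; exists ([tuple (c (nat_of_ord j)).1 | j < k], [tuple (c (nat_of_ord j)).2 | j < k + n]).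
apply/ffunP => -[t i]; rewrite !ffunE !calG_iter /=.
rewrite (@nth_prefix _ a0 (fun x => (c x).1)) //.
congr pair; apply: iter_local => x hx.
by rewrite (@nth_prefix _ q (fun x => (c x).2)) //; move: (ltn_ord t) (ltn_ord i) hx; lia.
Qed.

Lemma npat_F_lower (bs : config B) : (forall s j, iter s H bs j <> q) ->
  forall n, 2 ^ (K * n.+1) <= n_patterns calF 1 n.+1.
Proof.
move=> hbs n.
set J := n./2.+1.
have hupd : forall s i, upd Hl q bs s i by move=> s i; rewrite /upd; apply/eqP; apply: hbs.
pose ce (e : {ffun 'I_(2 * K) -> J.-tuple bool}) : config (A * B) :=
  fun i => ([ffun j => bitc (e j) i], bs i).
have coord : forall e j t, ((iter t calF (ce e) 0).1) j = iter t (ca_global F_loc) (bitc (e j)) 0.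
  move=> e j t; rewrite calF_iter /= fwd_full // F2_coord.
  apply: iter_local => x _; by rewrite /ce ffunE.
apply: (@leq_trans #|{ffun 'I_(2 * K) -> J.-tuple bool}|).
  rewrite card_ffun card_tuple card_bool card_ord -expnM; apply: leq_pexp2l => //.
  have := odd_double_half n; rewrite /J -muln2; set h := n./2; move: (odd n) => [|] /= ?; nia.
apply: (npat_lower (g := fun e => orbit_pattern calF 1 n.+1 (ce e))); last first.
  by move=> e; exists (ce e).
move=> e e' heq; apply/ffunP => j; apply: NNPP => hne.
have ex : exists m, (m < J) && (nth false (e j) m != nth false (e' j) m).
  apply: NNPP => hall; apply: hne; apply: val_inj.
  apply: (@eq_from_nth _ false); first by rewrite !size_tuple.
  move=> i; rewrite size_tuple => hi; apply/eqP; apply: contraT => hd.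
  by case: hall; exists i; rewrite hi.
case: (ex_minnP ex) => m /andP [hmJ hm] hmin.
have hm2 : m.*2 < n.+1 by rewrite ltnS -geq_half_double -ltnS.
have := congr1 (fun f : {ffun 'I_n.+1 * 'I_1 -> A * B} => (f (Ordinal hm2, ord0)).1 j) heq.
rewrite !ffunE /= !coord; apply/eqP; apply: bitc_diff => // l hl.
apply/eqP; apply: contraT => hd.
have := hmin l; rewrite (ltn_trans hl hmJ) hd /= => /(_ isT); lia.
Qed.

End Part1.

Lemma part1 (B : finType) (Hl : B -> B -> B) (q : B) (K : nat) (Hspread : spreading Hl q) :
  (log2 (INR #|B|) < INR K) -> ~ nilpotent (ca_global Hl) ->
  exists hF hG : R, has_entropy (ca_global (@calF_loc B Hl q K)) hF /\
    has_entropy (ca_global (@calG_loc B Hl K)) hG /\ (hG < hF).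
Proof.
move=> hK hn.
have [bs hbs] := nonnil_orbit Hspread hn.
pose a0 : alphA K := [ffun _ => ord0].
pose x0 : alphA K * B := (a0, q).
have [hF [LF [cF lF]]] := entropy_exists (calF_loc Hl q (k:=K)) x0.
have [hG [LG [cG lG]]] := entropy_exists (calG_loc Hl (k:=K)) x0.
exists hF, hG; split; first by exists LF.
split; first by exists LG.
have hA : (0 < #|alphA K|)%nat by apply/card_gt0P; exists a0.
have hB : (0 < #|B|)%nat by apply/card_gt0P; exists q.
have hGle : (hG <= log2 (INR #|B|)).
  apply: (proj2 lG) => x [k <-].
  apply: (cv_upper (cG k) (C := (INR k * (log2 (INR #|alphA K|) + log2 (INR #|B|))))) => n.
  have hp := INR_S_pos n.
  have h1 := npat_G Hl q a0 k n.+1.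
  have hpos : (0 < n_patterns (ca_global (@calG_loc B Hl K)) k n.+1)%nat by apply: npat_gt0.
  have h2 : (log2 (INR (n_patterns (ca_global (@calG_loc B Hl K)) k n.+1)) <=
             INR k * log2 (INR #|alphA K|) + INR (k + n.+1) * log2 (INR #|B|)).
    apply: (Rle_trans _ (log2 (INR (#|alphA K| ^ k * #|B| ^ (k + n.+1))%nat))).
      apply: log2_le; first exact: INR_pos_nat.
      by apply: le_INR; apply/leP.
    rewrite INR_muln log2_mult; try (apply: INR_pos_nat; rewrite expn_gt0 ?hA ?hB //).
    rewrite !INR_expn !log2_pow; try exact: INR_pos_nat.
    exact: Rle_refl.
  rewrite INR_addn Rmult_plus_distr_r in h2.
  rewrite {1}(_ : log2 (INR #|B|) = INR n.+1 * log2 (INR #|B|) / INR n.+1); last by field; lra.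
  rewrite /Rdiv -Rmult_plus_distr_r; apply: Rmult_le_compat_r.
    by apply: Rlt_le; apply: Rinv_0_lt_compat.
  rewrite Rmult_plus_distr_l; apply: (Rle_trans _ _ _ h2); apply: Req_le; ring.
have hFge : (INR K <= LF 1%nat).
  apply: (cv_lower (cF 1%nat)) => n.
  have hp := INR_S_pos n.
  have h := log2_nat_ge (isT : (0 < 2)%nat) (npat_F_lower K hbs n).
  rewrite INR_muln (_ : INR 2 = 2) in h; last by rewrite /=; lra.
  rewrite log2_2 Rmult_1_r in h.
  rewrite (_ : INR K = INR K * INR n.+1 / INR n.+1); last by field; lra.
  rewrite /Rdiv; apply: Rmult_le_compat_r; last exact: h.
  by apply: Rlt_le; apply: Rinv_0_lt_compat.
have hFL : (LF 1%nat <= hF) by apply: (proj1 lF); exists 1%nat.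
lra.
Qed.

Theorem mainTheorem2 (B : finType) (Hl : B -> B -> B) (q : B) (k : nat)
  (Hspread : spreading Hl q)
  (Hk : Rlt (log2 (INR #|B|)) (INR k)) :
  (~ nilpotent (ca_global Hl) ->
     exists hF hG : R,
       has_entropy (ca_global (@calF_loc B Hl q k)) hF /\
       has_entropy (ca_global (@calG_loc B Hl k)) hG /\ Rlt hG hF) /\
  (nilpotent (ca_global Hl) ->
     strongly_conjugate (ca_global (@calF_loc B Hl q k)) (ca_global (@calG_loc B Hl k)) /\
     has_entropy (ca_global (@calF_loc B Hl q k)) 0 /\
     has_entropy (ca_global (@calG_loc B Hl k)) 0).
Proof.
split; first exact: part1.
exact: part2.
Qed.
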